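(* Let $\Omega\subset\mathbb R^d$ be a bounded Borel set, $f:\Omega\to[0,\infty)$ with $\int_\Omega f=1$, $p\ge1$, $x_1,x_2\in\Omega$, $h_1,h_2:[0,1]\to[0,\infty)$ continuous and non-decreasing, and $\kappa\in\mathbb N$, $\kappa\ge1$. Assume $G$ is Lipschitz with constant $L<\kappa$. Let $t_1,\dots,t_\kappa\in\mathbb R$ be arbitrary and define for $n\ge\kappa$ $$t_{n+1}=\frac1\kappa\sum_{m=n-\kappa+1}^nG(t_m),$$ and for $n>\kappa$ let $\psi_n(x)=0$ if $\tau(x)<t_n$ and $\psi_n(x)=1$ otherwise. Then $t_n\to\bar t$ and $\psi_n\to\bar\psi$ uniformly on every compact subset of $\Omega\setminus\{\tau=\bar t\}$.
   Context: $\tau(x)=|x-x_1|^p-|x-x_2|^p$, $m(t)=\int_{\{x\in\Omega:\tau(x)<t\}}f\,dx$, $G(t)=h_2(1-m(t))-h_1(m(t))$ (the difference between queue times at $x_2$ and $x_1$ when mass $m(t)$ goes to $x_1$). There is a unique $\bar t$ with $G(\bar t)=\bar t$, and $\bar\psi(x)=0$ if $\tau(x)<\bar t$, $\bar\psi(x)=1$ if $\tau(x)>\bar t$ (the unique equilibrium). *)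

(* Defs.v *)
From HB Require Import structures.
From mathcomp Require Import all_boot all_order all_algebra.
From mathcomp Require Import all_classical all_reals all_analysis.
Set Implicit Arguments. Unset Strict Implicit. Unset Printing Implicit Defensive.
Import Order.TTheory GRing.Theory Num.Theory.
Import numFieldNormedType.Exports.
Local Open Scope classical_set_scope.
Local Open Scope ring_scope.

(* Points of R^d are row vectors 'rV[R]_d (carrying the product = Euclidean
   topology from matrix_topology). *)

(* coordinates as a d-tuple; the d-tuple type carries the product Borel
   sigma-algebra (generated by the coordinate projections). *)
Definition rv2tuple (R : realType) (d : nat) (x : 'rV[R]_d) : d.-tuple R :=
  [tuple x ord0 i | i < d].

Definition Rd (R : realType) (d : nat) :=
  g_sigma_algebra_preimageType (@rv2tuple R d).

(* Euclidean norm |x| on R^d (the library norm on 'rV is the sup norm). *)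
Definition enorm (R : realType) (d : nat) (x : 'rV[R]_d) : R :=
  Num.sqrt (\sum_(i < d) (x ord0 i) ^+ 2).

(* mu is the (Borel) Lebesgue measure on R^d: it gives every closed box its
   volume (this determines the measure on Borel sets uniquely). *)
Definition is_lebesgue_Rd (R : realType) (d : nat)
    (mu : {measure set (Rd R d) -> \bar R}) : Prop :=
  forall a b : 'rV[R]_d, (forall i, a ord0 i <= b ord0 i) ->
    mu [set x : Rd R d | forall i, a ord0 i <= x ord0 i <= b ord0 i]
    = (\prod_(i < d) (b ord0 i - a ord0 i))%:E.

Definition tau (R : realType) (d : nat) (p : R) (x1 x2 : 'rV[R]_d)
    (x : 'rV[R]_d) : R :=
  powR (enorm (x - x1)) p - powR (enorm (x - x2)) p.

Definition mass (R : realType) (d : nat) (mu : {measure set (Rd R d) -> \bar R})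
    (Omega : set 'rV[R]_d) (f : 'rV[R]_d -> R) (p : R) (x1 x2 : 'rV[R]_d)
    (t : R) : R :=
  fine (\int[mu]_(x in [set x : Rd R d | Omega x /\ (tau p x1 x2 x < t)%R])
          (f x)%:E)%E.

Definition Gq (R : realType) (d : nat) (mu : {measure set (Rd R d) -> \bar R})
    (Omega : set 'rV[R]_d) (f : 'rV[R]_d -> R) (p : R) (x1 x2 : 'rV[R]_d)
    (h1 h2 : R -> R) (t : R) : R :=
  h2 (1 - mass mu Omega f p x1 x2 t) - h1 (mass mu Omega f p x1 x2 t).

Definition profile (R : realType) (d : nat) (p : R) (x1 x2 : 'rV[R]_d)
    (s : R) (x : 'rV[R]_d) : R :=
  if tau p x1 x2 x < s then 0 else 1.

(* Main.v *)
Require Import Defs.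
From HB Require Import structures.
From mathcomp Require Import all_boot all_order all_algebra.
From mathcomp Require Import all_classical all_reals all_analysis.
From mathcomp Require Import ring lra zify.
Import Order.TTheory GRing.Theory Num.Theory.
Import numFieldNormedType.Exports.
Local Open Scope classical_set_scope.
Local Open Scope ring_scope.

Lemma int_le_set (dd : measure_display) (T : measurableType dd) (R : realType)
  (mu : {measure set T -> \bar R}) (D1 D2 : set T) (f : T -> R) :
  D1 `<=` D2 -> (forall x, D2 x -> 0 <= f x) ->
  (\int[mu]_(x in D1) (f x)%:E <= \int[mu]_(x in D2) (f x)%:E)%E.
Proof.
move=> D12 f0.
rewrite !ge0_integralE; last 2 first.
- by move=> x ?; rewrite lee_fin f0.
- by move=> x /D12 ?; rewrite lee_fin f0.
apply: le_ereal_sup => _ [h /= hf <-]; exists h => //= x.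
apply: (le_trans (hf x)); rewrite /patch.
case: ifPn => [/set_mem ?|_]; first by rewrite ifT // inE; apply: D12.
by case: ifPn => // /set_mem ?; rewrite lee_fin f0.
Qed.

Section Seq.
Context (R : realType) (G : R -> R) (kappa : nat) (L : R) (t : nat -> R) (tbar : R).
Hypothesis Hk : (1 <= kappa)%N.
Hypothesis HL0 : 0 <= L.
Hypothesis HLk : L < kappa%:R.
Hypothesis Gmono : forall x y, x <= y -> G y <= G x.
Hypothesis GLip : forall x y, `|G x - G y| <= L * `|x - y|.
Hypothesis Gfix : G tbar = tbar.
Hypothesis Ht : forall n, (kappa <= n)%N ->
       t n.+1 = kappa%:R^-1 * \sum_(n - kappa + 1 <= m < n.+1) G (t m).

Let k := kappa%:R : R.
Let kgt0 : 0 < k. Proof. by rewrite /k ltr0n. Qed.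

Lemma step_eq N : (kappa <= N)%N ->
  k * t N.+2 = k * t N.+1 + (G (t N.+1) - G (t (N.+1 - kappa))).
Proof.
move=> HN.
have E1 : (N.+1 - kappa + 1 = (N - kappa).+2)%N by rewrite addn1 subSn.
have E2 : (N - kappa + 1 = (N - kappa).+1)%N by rewrite addn1.
have E3 : (N.+1 - kappa = (N - kappa).+1)%N by rewrite subSn.
have A1 := Ht N.+1 (leqW HN). have A2 := Ht N HN.
rewrite E1 in A1; rewrite E2 in A2.
rewrite A1 {1}A2 E3 /k !mulrA divff ?mul1r; last by rewrite gt_eqF.
have H1 : ((N - kappa).+1 < N.+2)%N by lia.
have H2 : ((N - kappa).+1 <= N.+1)%N by lia.
have := @big_ltn R 0 +%R _ _ (fun m => G (t m)) H1.
rewrite (big_nat_recr _ _ _ H2) /= => E.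
lra.
Qed.

Let c := (k - L) / k.
Lemma c_gt0 : 0 < c. Proof. by rewrite /c divr_gt0 // subr_gt0. Qed.
Lemma c_le1 : c <= 1.
Proof. by rewrite /c ler_pdivrMr // mul1r lerBlDr lerDl. Qed.

Lemma Gdiff u v m : m <= u -> m <= v -> 0 <= G u - G v + L * (u - m).
Proof.
move=> mu mv; have [uv|vu] := leP v u.
  have := GLip v u; rewrite [`|v - u|]distrC (ger0_norm (_ : 0 <= u - v)) ?subr_ge0 // => H.
  have H2 := ler_norm (G v - G u).
  have H3 : L * (u - v) <= L * (u - m) by rewrite ler_wpM2l // lerB.
  lra.
have := Gmono _ _ (ltW vu) => H.
have H3 : 0 <= L * (u - m) by rewrite mulr_ge0 // subr_ge0.
lra.
Qed.

Lemma Gdiff' u v M : u <= M -> v <= M -> 0 <= G v - G u + L * (M - u).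
Proof.
move=> mu mv; have [uv|vu] := leP v u.
  have := Gmono _ _ uv => H.
  have H3 : 0 <= L * (M - u) by rewrite mulr_ge0 // subr_ge0.
  lra.
have := GLip u v; rewrite [`|u - v|]distrC (ger0_norm (_ : 0 <= v - u)); last by rewrite subr_ge0 ltW.
move=> H.
have H2 := ler_norm (G u - G v).
have H3 : L * (v - u) <= L * (M - u) by rewrite ler_wpM2l // lerB.
lra.
Qed.

Lemma keylo N m : (kappa <= N)%N -> m <= t N.+1 -> m <= t (N.+1 - kappa) ->
  c * (t N.+1 - m) <= t N.+2 - m.
Proof.
move=> HN h1 h2; have E := step_eq N HN.
have D := Gdiff _ _ _ h1 h2.
have -> : t N.+2 - m = c * (t N.+1 - m) + (G (t N.+1) - G (t (N.+1 - kappa)) + L * (t N.+1 - m)) / k.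
  apply: (mulfI (lt0r_neq0 kgt0)); rewrite mulrDr E /c.
  field; exact: lt0r_neq0.
by rewrite lerDl divr_ge0 // ltW.
Qed.

Lemma keyhi N M : (kappa <= N)%N -> t N.+1 <= M -> t (N.+1 - kappa) <= M ->
  c * (M - t N.+1) <= M - t N.+2.
Proof.
move=> HN h1 h2; have E := step_eq N HN.
have D := Gdiff' _ _ _ h1 h2.
have -> : M - t N.+2 = c * (M - t N.+1) + (G (t (N.+1 - kappa)) - G (t N.+1) + L * (M - t N.+1)) / k.
  apply: (mulfI (lt0r_neq0 kgt0)); rewrite mulrBr E /c.
  field; exact: lt0r_neq0.
by rewrite lerDl divr_ge0 // ltW.
Qed.

Lemma inv_window N m M : (kappa <= N)%N ->
  (forall j, (N.+1 - kappa <= j <= N.+1)%N -> m <= t j <= M) ->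
  forall j, (N.+1 - kappa <= j)%N -> m <= t j <= M.
Proof.
move=> HN W.
suff S : forall i j, (N.+1 - kappa <= j <= N.+1 + i)%N -> m <= t j <= M.
  by move=> j hj; apply: (S j); rewrite hj /=; lia.
elim=> [|i IH] j.
  by rewrite addn0; apply: W.
move=> /andP[hj1 hj2].
have [hj3|hj3] := leqP j (N.+1 + i).
  by apply: IH; rewrite hj1 hj3.
have -> : j = (N + i).+2 by lia.
have HNi : (kappa <= N + i)%N by lia.
have B1 : m <= t (N + i).+1 <= M by apply: IH; apply/andP; split; lia.
have B2 : m <= t ((N + i).+1 - kappa) <= M by apply: IH; apply/andP; split; lia.
move/andP: B1 => [B1a B1b]; move/andP: B2 => [B2a B2b].
have K1 := keylo _ _ HNi B1a B2a.
have K2 := keyhi _ _ HNi B1b B2b.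
have c0 := c_gt0.
have P1 : 0 <= c * (t (N + i).+1 - m) by rewrite mulr_ge0 ?(ltW c0) // subr_ge0.
have P2 : 0 <= c * (M - t (N + i).+1) by rewrite mulr_ge0 ?(ltW c0) // subr_ge0.
apply/andP; split; lra.
Qed.

Lemma geom_lo N m M : (kappa <= N)%N ->
  (forall j, (N.+1 - kappa <= j)%N -> m <= t j <= M) ->
  forall i, c ^+ i * (t N.+1 - m) <= t (N.+1 + i) - m.
Proof.
move=> HN B; elim=> [|i IH]; first by rewrite expr0 mul1r addn0.
have HNi : (kappa <= N + i)%N by lia.
have B1 : m <= t (N + i).+1 by have /andP[] := B (N + i).+1 ltac:(lia).
have B2 : m <= t ((N + i).+1 - kappa) by have /andP[] := B ((N + i).+1 - kappa)%N ltac:(lia).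
have K := keylo _ _ HNi B1 B2.
rewrite addSn in IH; rewrite addSn addnS.
rewrite exprS -mulrA.
apply: le_trans K; rewrite ler_wpM2l // ?ltW //; exact: c_gt0.
Qed.

Lemma geom_hi N m M : (kappa <= N)%N ->
  (forall j, (N.+1 - kappa <= j)%N -> m <= t j <= M) ->
  forall i, c ^+ i * (M - t N.+1) <= M - t (N.+1 + i).
Proof.
move=> HN B; elim=> [|i IH]; first by rewrite expr0 mul1r addn0.
have HNi : (kappa <= N + i)%N by lia.
have B1 : t (N + i).+1 <= M by have /andP[] := B (N + i).+1 ltac:(lia).
have B2 : t ((N + i).+1 - kappa) <= M by have /andP[] := B ((N + i).+1 - kappa)%N ltac:(lia).
have K := keyhi _ _ HNi B1 B2.
rewrite addSn in IH; rewrite addSn addnS.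
rewrite exprS -mulrA.
apply: le_trans K; rewrite ler_wpM2l // ?ltW //; exact: c_gt0.
Qed.

Lemma tbar_in N m M : (kappa <= N)%N ->
  (forall j, (N - kappa <= j)%N -> m <= t j <= M) -> m <= tbar <= M.
Proof.
move=> HN B.
have Hsum : (N.+1 - (N - kappa + 1) = kappa)%N by lia.
have tN := Ht N HN.
have /andP[Bl Bu] := B N.+1 ltac:(lia).
apply/andP; split.
  rewrite leNgt; apply/negP => lt.
  have S : \sum_(N - kappa + 1 <= m0 < N.+1) G (t m0) <= \sum_(N - kappa + 1 <= m0 < N.+1) tbar.
    apply: ler_sum_nat => i /andP[hi1 hi2].
    rewrite -Gfix; apply: Gmono.
    have /andP[] := B i ltac:(lia) => + _; apply: le_trans; exact: ltW.
  rewrite sumr_const_nat Hsum in S.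
  have : t N.+1 <= tbar.
    rewrite -mulr_natl in S.
    rewrite tN -(mulKf (lt0r_neq0 kgt0) tbar); apply: ler_wpM2l; [by rewrite invr_ge0 ltW | exact: S].
  lra.
rewrite leNgt; apply/negP => lt.
have S : \sum_(N - kappa + 1 <= m0 < N.+1) tbar <= \sum_(N - kappa + 1 <= m0 < N.+1) G (t m0).
  apply: ler_sum_nat => i /andP[hi1 hi2].
  rewrite -{1}Gfix; apply: Gmono.
  have /andP[] := B i ltac:(lia) => _; move/le_trans; apply; exact: ltW.
rewrite sumr_const_nat Hsum in S.
have : tbar <= t N.+1.
  rewrite -mulr_natl in S.
  rewrite tN -(mulKf (lt0r_neq0 kgt0) tbar); apply: ler_wpM2l; [by rewrite invr_ge0 ltW | exact: S].
lra.
Qed.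

Let c' := c ^+ kappa.+1.
Let q := 1 - c' / 2.
Lemma c'_gt0 : 0 < c'. Proof. by rewrite /c' exprn_gt0 // c_gt0. Qed.
Lemma c'_le1 : c' <= 1. Proof. by rewrite /c' exprn_ile1 ?c_le1 // ltW // c_gt0. Qed.
Lemma cpow_ge i : (i <= kappa.+1)%N -> c' <= c ^+ i.
Proof. move=> hi; apply: ler_wiXn2l => //; [exact: ltW c_gt0 | exact: c_le1]. Qed.

Lemma contract N m M : (kappa <= N)%N ->
  (forall j, (N.+1 - kappa <= j)%N -> m <= t j <= M) ->
  exists N' m' M', [/\ (kappa <= N')%N, M' - m' <= q * (M - m) &
     forall j, (N'.+1 - kappa <= j)%N -> m' <= t j <= M'].
Proof.
move=> HN B.
have /andP[BNl BNu] := B N.+1 ltac:(lia).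
have c'0 := c'_gt0; have c'1 := c'_le1.
have HN' : (kappa <= N + kappa.+1)%N by lia.
exists (N + kappa.+1)%N.
have [hm|hm] := leP ((m + M) / 2) (t N.+1).
  exists (m + c' * (M - m) / 2), M; split => //.
    rewrite /q; lra.
  apply: inv_window => // j /andP[hj1 hj2].
  have Bj := B j ltac:(lia); move/andP: Bj => [Bjl Bju].
  apply/andP; split => //.
  have -> : j = (N.+1 + (j - N.+1))%N by lia.
  have G1 := geom_lo _ _ _ HN B (j - N.+1).
  have G2 := cpow_ge (j - N.+1)%N ltac:(lia).
  have G3 : c' * ((M - m) / 2) <= c ^+ (j - N.+1) * (t N.+1 - m).
    apply: ler_pM => //; [exact: ltW | lra | lra].
  lra.
exists m, (M - c' * (M - m) / 2); split => //.
  rewrite /q; lra.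
apply: inv_window => // j /andP[hj1 hj2].
have Bj := B j ltac:(lia); move/andP: Bj => [Bjl Bju].
apply/andP; split => //.
have -> : j = (N.+1 + (j - N.+1))%N by lia.
have G1 := geom_hi _ _ _ HN B (j - N.+1).
have G2 := cpow_ge (j - N.+1)%N ltac:(lia).
have G3 : c' * ((M - m) / 2) <= c ^+ (j - N.+1) * (M - t N.+1).
  apply: ler_pM => //; [exact: ltW | lra | lra].
lra.
Qed.

Lemma fin_bound n : exists B, 1 <= B /\ forall j, (j <= n)%N -> `|t j| <= B.
Proof.
elim: n => [|n [B [B1 HB]]].
  exists (1 + `|t 0|); split; first by rewrite lerDl.
  by move=> j; rewrite leqn0 => /eqP ->; rewrite lerDr.
exists (B + `|t n.+1|); split; first by have := normr_ge0 (t n.+1); lra.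
move=> j; rewrite leq_eqVlt => /orP[/eqP ->|hj]; first by rewrite lerDr; lra.
have := HB j hj; have := normr_ge0 (t n.+1); lra.
Qed.

Lemma iterate : exists D, 0 < D /\ forall K, exists N m M,
  [/\ (kappa <= N)%N, M - m <= q ^+ K * D &
     forall j, (N.+1 - kappa <= j)%N -> m <= t j <= M].
Proof.
have [B [B1 HB]] := fin_bound kappa.+1.
exists (B + B); split; first lra.
elim=> [|K [N [m [M [HN HD HW]]]]].
  exists kappa, (- B), B; split => //; first by rewrite expr0 mul1r; lra.
  apply: inv_window => // j /andP[_ hj].
  by have := HB j hj; rewrite ler_norml.
have [N' [m' [M' [HN' HD' HW']]]] := contract _ _ _ HN HW.
exists N', m', M'; split => //.
have q0 : 0 <= q by rewrite /q; have := c'_le1; lra.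
apply: le_trans HD' _; rewrite exprS -mulrA; exact: ler_wpM2l.
Qed.

Lemma q_lt1 : `|q| < 1.
Proof. have := c'_le1; have := c'_gt0; rewrite /q => h1 h2; rewrite ger0_norm; lra. Qed.

Lemma t_cvg : t @ \oo --> tbar.
Proof.
have [D [D0 HI]] := iterate.
apply/cvgrPdist_lt => e e0.
have := cvg_expr q_lt1.
move/cvgrPdist_lt => /(_ (e / D)) /(_ ltac:(exact: divr_gt0)).
case=> K0 _ HK0.
have := HK0 K0 (leqnn K0); rewrite sub0r normrN => HK.
have [N [m [M [HN HD HW]]]] := HI K0.
have Hq : q ^+ K0 * D < e.
  by move: HK; rewrite ltr_pdivlMr // => HK; apply: le_lt_trans HK; apply: ler_wpM2r; [exact: ltW | exact: ler_norm].
have /andP[tb1 tb2] := tbar_in N.+1 m M (leqW HN) HW.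
exists N.+1 => // j /= hj.
have /andP[tj1 tj2] := HW j ltac:(lia).
rewrite ltr_norml; apply/andP; split; lra.
Qed.

End Seq.

Lemma phi_cont (R : realType) (p : R) : 1 <= p -> continuous (fun u : R => powR `|u| p).
Proof.
move=> p1 u.
have p0 : p != 0 by apply: lt0r_neq0; lra.
have [->|u0] := eqVneq u 0.
  apply/cvgrPdist_lt => e e0.
  rewrite normr0 powR0 //.
  exists (Num.min 1 e) => [|y /= hy]; first by rewrite /= lt_min ltr01 e0.
  rewrite sub0r normrN in hy.
  move: hy; rewrite lt_min => /andP[hy1 hy2].
  rewrite sub0r normrN ger0_norm ?powR_ge0 //.
  have [->|y0] := eqVneq y 0; first by rewrite normr0 powR0.
  apply: le_lt_trans hy2; apply: ge1r_powR => //.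
  by rewrite normr_gt0 y0 ltW.
have -> : (fun u : R => powR `|u| p) = (fun a : R => powR a p) \o (fun u : R => `|u|) by [].
apply: continuous_comp.
  exact: norm_continuous.
apply/differentiable_continuous/derivable1_diffP/derivable_powR.
by rewrite in_itv /= andbT normr_gt0.
Qed.

Lemma enorm_cont (R : realType) (d : nat) (a : 'rV[R]_d) :
  continuous (fun x : 'rV[R]_d => enorm (x - a)).
Proof.
rewrite /enorm.
have -> : (fun x : 'rV[R]_d => Num.sqrt (\sum_(i < d) ((x - a) ord0 i) ^+ 2)) =
  (fun s : R => Num.sqrt s) \o (fun x : 'rV[R]_d => \sum_(i < d) ((x ord0 i - a ord0 i) * (x ord0 i - a ord0 i))).
  by apply: funext => x /=; apply: congr1; apply: eq_bigr => i _; rewrite !mxE expr2.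
move=> x; apply: continuous_comp; last exact: sqrt_continuous.
apply: (@continuous_big _ _ +%R 0 xpredT add_continuous).
move=> i _ y.
have h1 : {for y, continuous (fun z : 'rV[R]_d => z ord0 i - a ord0 i)}.
  apply: continuousB; first exact: coord_continuous.
  exact: cst_continuous.
exact: (continuousM h1 h1).
Qed.

Lemma tau_cont (R : realType) (d : nat) (p : R) (x1 x2 : 'rV[R]_d) : 1 <= p ->
  continuous (tau p x1 x2).
Proof.
move=> p1.
have -> : tau p x1 x2 = (fun x => powR `|enorm (x - x1)| p - powR `|enorm (x - x2)| p).
  by apply: funext => x; rewrite /tau !ger0_norm // /enorm sqrtr_ge0.
move=> x.
have hA : {for x, continuous (fun x : 'rV[R]_d => powR `|enorm (x - x1)| p)}.
  apply: (continuous_comp (f := fun y : 'rV[R]_d => enorm (y - x1)) (g := fun u : R => powR `|u| p)).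
    exact: enorm_cont.
  exact: phi_cont.
have hB : {for x, continuous (fun x : 'rV[R]_d => powR `|enorm (x - x2)| p)}.
  apply: (continuous_comp (f := fun y : 'rV[R]_d => enorm (y - x2)) (g := fun u : R => powR `|u| p)).
    exact: enorm_cont.
  exact: phi_cont.
exact: (continuousB hA hB).
Qed.

Lemma sep_lemma (R : realType) (d : nat) (g : 'rV[R]_d -> R) (K : set 'rV[R]_d) (tb : R) :
  continuous g -> compact K -> (forall x, K x -> g x <> tb) ->
  exists2 del : R, 0 < del & forall x, K x -> del <= `|g x - tb|.
Proof.
move=> gc cK Hne.
have cI : compact (g @` K) by apply: continuous_compact => //; exact: continuous_subspaceT.
have clI : closed (g @` K) by apply: compact_closed => //; exact: Rhausdorff.
have op := closed_openC clI.
have nb : nbhs tb (~` (g @` K)).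
  apply: op => -[x Kx gx]; exact: (Hne x Kx gx).
move/nbhs_ballP: nb => [del del0 Hb].
exists del => // x Kx.
rewrite leNgt; apply/negP => hlt.
have : ball tb del (g x) by rewrite -ball_normE /= distrC.
move/Hb; apply; by exists x.
Qed.

Theorem theorem5p9 (R : realType) (d : nat)
    (mu : {measure set (Rd R d) -> \bar R}) (Hmu : is_lebesgue_Rd mu)
    (Omega : set 'rV[R]_d)
    (HOm : measurable (Omega : set (Rd R d)))
    (HObd : exists M : R, forall x, Omega x -> enorm x <= M)
    (f : 'rV[R]_d -> R)
    (Hfm : measurable_fun (Omega : set (Rd R d)) f)
    (Hf0 : forall x, Omega x -> 0 <= f x)
    (Hf1 : (\int[mu]_(x in (Omega : set (Rd R d))) (f x)%:E = 1)%E)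
    (p : R) (Hp : 1 <= p)
    (x1 x2 : 'rV[R]_d) (Hx1 : Omega x1) (Hx2 : Omega x2)
    (h1 h2 : R -> R)
    (Hh1c : {within `[0, 1], continuous h1})
    (Hh2c : {within `[0, 1], continuous h2})
    (Hh1m : {in `[0, 1] &, {homo h1 : s t / s <= t}})
    (Hh2m : {in `[0, 1] &, {homo h2 : s t / s <= t}})
    (Hh10 : forall s, 0 <= s <= 1 -> 0 <= h1 s)
    (Hh20 : forall s, 0 <= s <= 1 -> 0 <= h2 s)
    (kappa : nat) (Hk : (1 <= kappa)%N)
    (L : R) (HL0 : 0 <= L) (HLk : L < kappa%:R)
    (HG : L.-lipschitz (Gq mu Omega f p x1 x2 h1 h2))
    (tbar : R) (Htbar : Gq mu Omega f p x1 x2 h1 h2 tbar = tbar)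
    (t : nat -> R)
    (Ht : forall n, (kappa <= n)%N ->
       t n.+1 = kappa%:R^-1 *
         \sum_(n - kappa + 1 <= m < n.+1) Gq mu Omega f p x1 x2 h1 h2 (t m)) :
  t @ \oo --> tbar /\
  (forall K : set 'rV[R]_d, compact K -> K `<=` Omega ->
     (forall x, K x -> tau p x1 x2 x <> tbar) ->
     forall e : R, 0 < e ->
       \forall n \near \oo, forall x, K x ->
         `|profile p x1 x2 (t n) x - profile p x1 x2 tbar x| < e).

Proof.
set Gf := Gq mu Omega f p x1 x2 h1 h2.
set I := fun s => (\int[mu]_(x in [set x : Rd R d | Omega x /\ (tau p x1 x2 x < s)%R]) (f x)%:E)%E.
have Ige0 s : (0 <= I s)%E.
  by apply: integral_ge0 => x [Ox _]; rewrite lee_fin Hf0.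
have Ile s s' : s <= s' -> (I s <= I s')%E.
  move=> ss'; apply: int_le_set; first by move=> x [Ox h]; split => //; exact: lt_le_trans h ss'.
  by move=> x [Ox _]; apply: Hf0.
have Ile1 s : (I s <= 1)%E.
  rewrite -Hf1; apply: int_le_set; first by move=> x [].
  exact: Hf0.
have Ifin s : I s \is a fin_num.
  by rewrite ge0_fin_numE // (le_lt_trans (Ile1 s)) // ltry.
have m01 s : 0 <= mass mu Omega f p x1 x2 s <= 1.
  rewrite /mass -/(I s); apply/andP; split.
    by rewrite fine_ge0.
  by rewrite -lee_fin fineK.
have mmono s s' : s <= s' -> mass mu Omega f p x1 x2 s <= mass mu Omega f p x1 x2 s'.
  by move=> ss'; rewrite /mass -/(I s) -/(I s'); apply: fine_le => //; apply: Ile.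
have Gmono s s' : s <= s' -> Gf s' <= Gf s.
  move=> ss'; rewrite /Gf /Gq.
  have /andP[a1 a2] := m01 s; have /andP[b1 b2] := m01 s'; have mm := mmono _ _ ss'.
  have H1 : h1 (mass mu Omega f p x1 x2 s) <= h1 (mass mu Omega f p x1 x2 s').
    by apply: Hh1m => //; rewrite in_itv /= ?a1 ?a2 ?b1 ?b2.
  have H2 : h2 (1 - mass mu Omega f p x1 x2 s') <= h2 (1 - mass mu Omega f p x1 x2 s).
    apply: Hh2m; rewrite ?in_itv /=; try (apply/andP; split); lra.
  lra.
have GLip x y : `|Gf x - Gf y| <= L * `|x - y|.
  exact: (HG (x, y)).
have tc := @t_cvg R Gf kappa L t tbar Hk HL0 HLk Gmono GLip Htbar Ht.
split => //.
move=> K cK KO Kne e e0.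
have [del del0 Hdel] := @sep_lemma R d (tau p x1 x2) K tbar (@tau_cont R d p x1 x2 Hp) cK Kne.
move/cvgrPdist_lt: tc => /(_ del del0).
apply: filterS => n hn x Kx.
have hx := Hdel x Kx.
move: hn; rewrite /profile => hn.
have [ht|ht] := ltP (tau p x1 x2 x) tbar.
  rewrite ltr0_norm ?subr_lt0 // in hx.
  rewrite ifT; last by move: hn; rewrite ltr_norml => /andP[]; lra.
  by rewrite subrr normr0.
rewrite ger0_norm ?subr_ge0 // in hx.
rewrite ifF; last by apply/negbTE; rewrite -leNgt; move: hn; rewrite ltr_norml => /andP[]; lra.
by rewrite subrr normr0.
Qed.
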